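(* Fix a single machine with nonnegative real parameters $k^A,k^B,t^A,t^B$, and let $f(a,b)$, $cost^A$, $cost^B$, $mcost^A$ and $cost(a,b,s)$ be as defined in the context. Then for all integers $a,b\ge 0$, $$f(a,b)=\min_{0\le s\le \min(b,a+1)} cost(a,b,s).$$
   Context: A machine processes jobs of two types, A and B, in batches. A schedule for the task-combination $(a,b)$ is a finite sequence of batches, each a nonempty group of jobs of a single type, with consecutive batches of different types, processing exactly $a$ A-jobs and $b$ B-jobs in total. An A-batch of $x$ jobs takes $t^A+k^A x^2$ time units, a B-batch of $x$ jobs takes $t^B+k^B x^2$ time units; the time of a schedule is the sum of its batch times (empty schedule: time $0$). $f(a,b)$ is the minimum time over all schedules for $(a,b)$. For integers $a,s\ge 0$ define $cost^A(a,s)=\min\{s\,t^A+k^A(x_1^2+\dots+x_s^2) : x_1+\dots+x_s=a,\ x_i\in\mathbb{Z}_{\ge 0}\}$ (empty batches allowed here), with $cost^A(0,0)=0$ and $cost^A(a,0)=+\infty$ for $a>0$; $cost^B(b,s)$ is defined analogously with $t^B,k^B$. Define $mcost^A(a,s)=\min\{cost^A(a,s') : s'\in\{s-1,s,s+1\},\ s'\ge 0\}$ and $cost(a,b,s)=cost^B(b,s)+mcost^A(a,s)$, with the usual arithmetic conventions for $+\infty$. *)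

(* Defs.v *)
From HB Require Import structures.
From mathcomp Require Import all_boot all_order all_algebra.
From mathcomp Require Import boolp classical_sets reals constructive_ereal ereal.
Set Implicit Arguments. Unset Strict Implicit. Unset Printing Implicit Defensive.
Import Order.TTheory GRing.Theory Num.Theory.
Local Open Scope ring_scope.
Local Open Scope classical_set_scope.

(* A batch is a pair (type, size): type = true for A, false for B. *)
Definition batch := (bool * nat)%type.

Section Machine.
Variables (R : realType) (kA kB tA tB : R).

Definition batch_time (p : batch) : R :=
  if p.1 then tA + kA * (p.2 ^ 2)%:R else tB + kB * (p.2 ^ 2)%:R.

Definition sched_time (s : seq batch) : R := \sum_(p <- s) batch_time p.

Definition is_schedule (a b : nat) (s : seq batch) : Prop :=
  [/\ all (fun p : batch => 0 < p.2)%N s,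
      sorted (fun p q : batch => p.1 != q.1) s,
      (\sum_(p <- s | p.1) p.2)%N = a &
      (\sum_(p <- s | ~~ p.1) p.2)%N = b].

Definition f (a b : nat) : \bar R :=
  ereal_inf [set (sched_time s)%:E | s in is_schedule a b].

(* cost(a,s) = min { s t + k (x_1^2+...+x_s^2) : x_1+...+x_s = a, x_i >= 0 };
   empty min = +oo (so cost(a,0) = +oo for a>0, cost(0,0) = 0). *)
Definition gcost (t k : R) (a s : nat) : \bar R :=
  \big[Order.min/+oo%E]_(x : {ffun 'I_s -> 'I_a.+1} | (\sum_(i < s) x i)%N == a)
     ((s%:R * t + k * (\sum_(i < s) (x i ^ 2)%N)%:R)%:E).

Definition costA (a s : nat) : \bar R := gcost tA kA a s.
Definition costB (b s : nat) : \bar R := gcost tB kB b s.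

Definition mcostA (a s : nat) : \bar R :=
  Order.min (Order.min (costA a s) (costA a s.+1))
            (if s is s'.+1 then costA a s' else +oo%E).

Definition cost (a b s : nat) : \bar R := (costB b s + mcostA a s)%E.

End Machine.

(* Main.v *)
Require Import Defs.
From HB Require Import structures.
From mathcomp Require Import all_boot all_order all_algebra.
From mathcomp Require Import boolp classical_sets reals constructive_ereal ereal.
From mathcomp Require Import zify ring lra.
Import Order.TTheory GRing.Theory Num.Theory.


Definition sq (l : seq nat) := (\sum_(y <- l) y ^ 2)%N.
Definition sm (l : seq nat) := (\sum_(y <- l) y)%N.

Lemma sm_cons y l : sm (y :: l) = (y + sm l)%N.
Proof. by rewrite /sm big_cons. Qed.
Lemma sq_cons y l : sq (y :: l) = (y ^ 2 + sq l)%N.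
Proof. by rewrite /sq big_cons. Qed.

Lemma sm_perm {l1 l2 : seq nat} : perm_eq l1 l2 -> sm l1 = sm l2.
Proof. exact: perm_big. Qed.
Lemma sq_perm {l1 l2 : seq nat} : perm_eq l1 l2 -> sq l1 = sq l2.
Proof. exact: perm_big. Qed.

Lemma sm_le_size (l : seq nat) : (forall z, z \in l -> z <= 1)%N -> (sm l <= size l)%N.
Proof.
elim: l => [|y l IH] H; first by rewrite /sm big_nil.
rewrite sm_cons /=.
have h1 : (y <= 1)%N by apply: H; rewrite inE eqxx.
have h2 : (sm l <= size l)%N by apply: IH => z zl; apply: H; rewrite inE zl orbT.
lia.
Qed.

Lemma size_le_sm (l : seq nat) : all (fun y => 0 < y)%N l -> (size l <= sm l)%N.
Proof.
elim: l => [|y l IH] /=; first by rewrite /sm big_nil.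
move=> /andP[h1 /IH h2]; rewrite sm_cons; lia.
Qed.

Lemma step (l : seq nat) : 0 \in l -> (size l <= sm l)%N ->
  exists l1, [/\ size l1 = size l, sm l1 = sm l & (sq l1 < sq l)%N].
Proof.
move=> l0 hs.
have p1 := perm_to_rem l0.
set r := rem 0 l in p1.
have sz : @size nat l = (@size nat r).+1 by rewrite (perm_size p1).
rewrite (sm_perm p1) sm_cons add0n in hs.
have : has (fun z => 1 < z)%N r.
  apply/negPn/negP => /hasPn H.
  have : (sm r <= @size nat r)%N.
    by apply: sm_le_size => z zr; have := H z zr; rewrite -leqNgt.
  rewrite sz in hs; lia.
case/hasP=> z zr z1.
have p2 := perm_to_rem zr.
exists [:: 1%N, z.-1 & rem z r]; split.
- by rewrite sz (perm_size p2).
- by rewrite (sm_perm p1) !sm_cons (sm_perm p2) !sm_cons; lia.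
- rewrite (sq_perm p1) !sq_cons (sq_perm p2) !sq_cons; nia.
Qed.

Arguments step {l}.
Lemma notin0_all (l : seq nat) : 0 \notin l -> all (fun y => 0 < y)%N l.
Proof.
move=> h; apply/allP => y yl; rewrite lt0n; apply/negP => /eqP y0.
by move: h; rewrite -y0 yl.
Qed.

Lemma pos (l : seq nat) : (size l <= sm l)%N -> exists l' : seq nat,
  [/\ size l' = size l, all (fun y => 0 < y)%N l', sm l' = sm l & (sq l' <= sq l)%N].
Proof.
have : forall n (l : seq nat), (sq l <= n)%N -> (size l <= sm l)%N -> exists l' : seq nat,
  [/\ size l' = size l, all (fun y => 0 < y)%N l', sm l' = sm l & (sq l' <= sq l)%N];
  last by move=> H; apply: (H (sq l)).
elim=> [|n IH] {}l hn hs.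
  case: (boolP (0 \in l)) => h0.
    by have [l1 [_ _ lt]] := step h0 hs; lia.
  by exists l; split => //; apply: notin0_all.
case: (boolP (0 \in l)) => h0; last by exists l; split => //; apply: notin0_all.
have [l1 [e1 e2 lt]] := step h0 hs.
have [||l' [f1 f2 f3 f4]] := IH l1; [lia|lia|].
exists l'; split => //; [lia|lia|lia].
Qed.

Lemma shrink (l : seq nat) : exists l1 : seq nat,
  [/\ size l1 = minn (size l) (sm l), sm l1 = sm l & sq l1 = sq l].
Proof.
move: {2}(size l) (leqnn (size l)) => n; elim: n l => [|n IH] l hn.
  by exists l; split => //; lia.
case: (leqP (size l) (sm l)) => hl; first by exists l; split => //; lia.
have h0 : 0 \in l.
  apply/negPn/negP => /notin0_all /size_le_sm; lia.
have p1 := perm_to_rem h0.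
set r := rem 0 l in p1.
have sz : @size nat l = (@size nat r).+1 by rewrite (perm_size p1).
have esm : sm l = sm r by rewrite (sm_perm p1) sm_cons.
have esq : sq l = sq r by rewrite (sq_perm p1) sq_cons.
have [|l1 [f1 f2 f3]] := IH r; first lia.
exists l1; split; [lia|lia|lia].
Qed.

Lemma norm (l : seq nat) : exists l' : seq nat,
  [/\ size l' = minn (size l) (sm l), all (fun y => 0 < y)%N l', sm l' = sm l
    & (sq l' <= sq l)%N].
Proof.
have [l1 [f1 f2 f3]] := shrink l.
have [|l' [g1 g2 g3 g4]] := pos l1; first lia.
exists l'; split => //; lia.
Qed.

Definition neqr := fun p q : batch => p.1 != q.1.

Lemma alt_path (x : bool) (t : seq bool) : path (fun x y => x != y) x t ->
  if x then (count negb (x :: t) <= count id (x :: t) <= (count negb (x :: t)).+1)%N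
  else (count id (x :: t) <= count negb (x :: t) <= (count id (x :: t)).+1)%N.
Proof.
elim: t x => [|y t IH] x /=; first by case: x.
move=> /andP[xy /IH]; case: x xy; case: y => //= _; lia.
Qed.

Lemma alt_sched (s : seq batch) : sorted neqr s ->
  (count (fun p : batch => p.1) s <= (count (fun p : batch => ~~ p.1) s).+1)%N /\
  (count (fun p : batch => ~~ p.1) s <= (count (fun p : batch => p.1) s).+1)%N.
Proof.
move=> hs.
have : sorted (fun x y : bool => x != y) (map fst s) by rewrite sorted_map.
have -> : count (fun p : batch => p.1) s = count id (map fst s) by rewrite count_map.
have -> : count (fun p : batch => ~~ p.1) s = count negb (map fst s) by rewrite count_map.
case: (map fst s) => [|x t] //= /alt_path; case: x => /=; lia.
Qed.

Fixpoint inter (c : bool) (l1 l2 : seq nat) : seq batch :=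
  match l1, l2 with
  | x :: l1', y :: l2' => (c, x) :: (~~ c, y) :: inter c l1' l2'
  | _, _ => [::]
  end.

Lemma inter_path c w l1 l2 : path neqr (~~ c, w) (inter c l1 l2).
Proof.
elim: l1 l2 w => [|x l1 IH] [|y l2] w //=.
rewrite /neqr /= IH; case: c {IH} => //.
Qed.

Lemma inter_all c l1 l2 : all (fun y => 0 < y)%N l1 -> all (fun y => 0 < y)%N l2 ->
  all (fun p : batch => 0 < p.2)%N (inter c l1 l2).
Proof.
elim: l1 l2 => [|x l1 IH] [|y l2] //= /andP[-> h1] /andP[-> h2] /=.
exact: IH.
Qed.

Lemma inter_big c l1 l2 (T : Type) (idx : T) (op : Monoid.com_law idx) (F : batch -> T) :
  size l1 = size l2 ->
  \big[op/idx]_(p <- inter c l1 l2) F p =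
  op (\big[op/idx]_(x <- l1) F (c, x)) (\big[op/idx]_(y <- l2) F (~~ c, y)).
Proof.
elim: l1 l2 => [|x l1 IH] [|y l2] //=.
  by move=> _; rewrite !big_nil Monoid.mulm1.
move=> [] /IH {}IH; rewrite !big_cons IH.
by rewrite -!Monoid.mulmA; congr (op _ _); rewrite Monoid.mulmCA.
Qed.

Lemma build (lA lB : seq nat) :
  all (fun y => 0 < y)%N lA -> all (fun y => 0 < y)%N lB ->
  [\/ size lA = size lB, size lA = (size lB).+1 | (size lA).+1 = size lB] ->
  exists sch : seq batch,
  [/\ all (fun p : batch => 0 < p.2)%N sch, sorted neqr sch &
   forall (T : Type) (idx : T) (op : Monoid.com_law idx) (F : batch -> T),
   \big[op/idx]_(p <- sch) F p =
   op (\big[op/idx]_(x <- lA) F (true, x)) (\big[op/idx]_(y <- lB) F (false, y))].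
Proof.
move=> pA pB [e|e|e].
- exists (inter true lA lB); split.
  + exact: inter_all.
  + case: (inter true lA lB) (inter_path true 0 lA lB) => //= p l.
    by case/andP.
  + by move=> T idx op F; rewrite inter_big.
- case: lA pA e => [|x lA] //= /andP[px pA] [e].
  exists ((true, x) :: inter false lB lA); split.
  + by rewrite /= px; apply: inter_all.
  + exact: (inter_path false x lB lA).
  + move=> T idx op F; rewrite !big_cons (inter_big _ _ _ _ _ op F) //=.
    by rewrite -Monoid.mulmA [op (\big[op/idx]_(y <- lB) _) _]Monoid.mulmC.
- case: lB pB e => [|y lB] //= /andP[py pB] [e].
  exists ((false, y) :: inter true lA lB); split.
  + by rewrite /= py; apply: inter_all.
  + exact: (inter_path true y lA lB).
  + move=> T idx op F; rewrite !big_cons (inter_big _ _ _ _ _ op F) //=.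
    by rewrite Monoid.mulmCA.
Qed.
Local Open Scope ring_scope.

Lemma mem_le_sm (l : seq nat) y : y \in l -> (y <= sm l)%N.
Proof.
move=> yl; rewrite (sm_perm (perm_to_rem yl)) sm_cons; exact: leq_addr.
Qed.

Lemma sm_nth (l : seq nat) : (\sum_(i < size l) nth 0%N l i)%N = sm l.
Proof. by rewrite /sm (big_nth 0%N) big_mkord. Qed.

Lemma sq_nth (l : seq nat) : (\sum_(i < size l) (nth 0%N l i) ^ 2)%N = sq l.
Proof. by rewrite /sq (big_nth 0%N) big_mkord. Qed.

Lemma gcost_le (R : realType) (t k : R) (l : seq nat) :
  (gcost t k (sm l) (size l) <= ((size l)%:R * t + k * (sq l)%:R)%:E)%E.
Proof.
pose x : {ffun 'I_(size l) -> 'I_(sm l).+1} := [ffun i : 'I_(size l) => inord (nth 0%N l i)].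
have xv : forall i, (x i : nat) = nth 0%N l i.
  move=> i; rewrite ffunE inordK // ltnS; apply: mem_le_sm; exact: mem_nth.
apply: (bigmin_inf x).
  apply/eqP; rewrite -[X in _ = X]sm_nth; apply: eq_bigr => i _; exact: xv.
rewrite lee_fin -sq_nth.
have -> : (\sum_(i < size l) (x i : nat) ^ 2)%N = (\sum_(i < size l) nth 0%N l i ^ 2)%N.
  by apply: eq_bigr => i _; rewrite xv.
by [].
Qed.

Lemma gcost_cases (R : realType) (t k : R) a s :
  gcost t k a s = +oo%E \/ exists l : seq nat, [/\ size l = s, sm l = a &
    gcost t k a s = (s%:R * t + k * (sq l)%:R)%:E].
Proof.
rewrite /gcost.
elim/big_ind: _ => [|v w hv hw|x /eqP hx]; first by left.
- by rewrite minEle; case: ifP.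
- right; exists [seq (x i : nat) | i <- enum 'I_s]; split.
  + by rewrite size_map size_enum_ord.
  + by rewrite /sm big_map big_enum /=.
  + by rewrite /sq big_map big_enum /=.
Qed.

Lemma sum_lin (R : realType) (t k : R) (l : seq nat) :
  \sum_(x <- l) (t + k * (x ^ 2)%:R) = (size l)%:R * t + k * (sq l)%:R.
Proof.
elim: l => [|y l IH]; first by rewrite /sq !big_nil !mul0r mulr0 addr0.
rewrite big_cons IH sq_cons /= natrD; ring.
Qed.

Lemma gcost_nNy (R : realType) (t k : R) a s : gcost t k a s != -oo%E.
Proof. by case: (gcost_cases _ t k a s) => [->|[l [_ _ ->]]]. Qed.

Lemma mcost_nNy (R : realType) (kA kB tA tB : R) a s : mcostA kA tA a s != -oo%E.
Proof.
have h : forall x y : \bar R, x != -oo%E -> y != -oo%E -> Order.min x y != -oo%E.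
  by move=> x y; rewrite minEle; case: ifP.
rewrite /mcostA; apply: (h); [apply: (h)|case: s => [|s]] => //; exact: gcost_nNy.
Qed.

Lemma mcost_cases (R : realType) (kA kB tA tB : R) a s : exists s0,
  [\/ s0 = s, s0 = s.+1 | s0.+1 = s] /\
  (mcostA kA tA a s = costA kA tA a s0 \/ mcostA kA tA a s = +oo%E).
Proof.
rewrite /mcostA !minEle.
case: ifP => _; [case: ifP => _|].
- by exists s; split; [constructor 1|left].
- by exists s.+1; split; [constructor 2|left].
- case: s => [|s]; first by exists 0%N; split; [constructor 1|right].
  by exists s; split; [constructor 3|left].
Qed.

Lemma mcost_le (R : realType) (kA kB tA tB : R) a s s0 :
  [\/ s0 = s, s0 = s.+1 | s0.+1 = s] ->
  (mcostA kA tA a s <= costA kA tA a s0)%E.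
Proof.
rewrite /mcostA => -[->|->|<-]; rewrite !ge_min ?lexx ?orbT //.
Qed.

Lemma up (R : realType) (kA kB tA tB : R)
  (hkA : 0 <= kA) (hkB : 0 <= kB) (htA : 0 <= tA) (htB : 0 <= tB)
  (a b s s0 : nat) : (s <= b)%N -> (s <= a.+1)%N ->
  [\/ s0 = s, s0 = s.+1 | s0.+1 = s] ->
  (f kA kB tA tB a b <= costB kB tB b s + costA kA tA a s0)%E.
Proof.
move=> hsb hsa hs0.
case: (gcost_cases _ tB kB b s) => [eB|[lB [zB sB eB]]].
  by rewrite /costB eB addye ?leey // gcost_nNy.
case: (gcost_cases _ tA kA a s0) => [eA|[lA [zA sA eA]]].
  by rewrite /costA eA addey ?leey // gcost_nNy.
rewrite /costB /costA eB eA.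
have [lB' [zB' pB sB' qB]] := norm lB.
have [lA' [zA' pA sA' qA]] := norm lA.
rewrite zB sB in zB'; rewrite zA sA in zA'.
have eB2 : @size nat lB' = s by rewrite -(minn_idPl hsb); exact: zB'.
have eA2 : @size nat lA' = minn s0 a by exact: zA'.
have [sch [hp hsort hsum]] : exists sch : seq batch,
  [/\ all (fun p : batch => 0 < p.2)%N sch, sorted neqr sch &
   forall (T : Type) (idx : T) (op : Monoid.com_law idx) (F : batch -> T),
   \big[op/idx]_(p <- sch) F p =
   op (\big[op/idx]_(x <- lA') F (true, x)) (\big[op/idx]_(y <- lB') F (false, y))].
  apply: build => //; rewrite zA' zB' (minn_idPl hsb).
  case: (leqP s0 a) => h; first exact: hs0.
  case: (eqVneq a s) => e; first by constructor 1.
  constructor 3; case: hs0 => e'; lia.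
have z0 : forall l : seq nat, (\sum_(y <- l) 0)%N = 0%N.
  by elim=> [|x l IH]; rewrite ?big_nil ?big_cons ?IH.
have hsch : is_schedule a b sch.
  split => //.
  - by rewrite big_mkcond hsum /= z0 addn0 -sA -sA'.
  - by rewrite big_mkcond hsum /= z0 add0n -sB -sB'.
apply: (@le_trans _ _ (sched_time kA kB tA tB sch)%:E).
  by apply: ereal_inf_lbound; exists sch.
rewrite /sched_time hsum /= !sum_lin -EFinD lee_fin addrC.
apply: lerD; apply: lerD.
- by rewrite eB2.
- by apply: ler_wpM2l => //; rewrite ler_nat.
- by apply: ler_wpM2r => //; rewrite eA2 ler_nat; lia.
- by apply: ler_wpM2l => //; rewrite ler_nat.
Qed.

Theorem lemma1 (R : realType) (kA kB tA tB : R)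
  (hkA : 0 <= kA) (hkB : 0 <= kB) (htA : 0 <= tA) (htB : 0 <= tB)
  (a b : nat) :
  f kA kB tA tB a b =
  \big[Order.min/+oo%E]_(s < (minn b a.+1).+1) cost kA kB tA tB a b s.
Proof.
apply/eqP; rewrite eq_le; apply/andP; split.
- apply: le_bigmin; first exact: leey.
  move=> [s hs] _ /=; rewrite /cost.
  have hsb : (s <= b)%N by lia.
  have hsa : (s <= a.+1)%N by lia.
  have [s0 [hs0 [e|e]]] := mcost_cases _ kA kB tA tB a s; rewrite e.
    exact: up.
  by rewrite addey ?leey // gcost_nNy.
- apply: le_ereal_inf_tmp => _ [sch [hp hsort hA hB] <-].
  pose lA := [seq p.2 | p <- sch & p.1].
  pose lB := [seq p.2 | p <- sch & ~~ p.1].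
  have zA : @size nat lA = count (fun p : batch => p.1) sch by rewrite size_map size_filter.
  have zB : @size nat lB = count (fun p : batch => ~~ p.1) sch by rewrite size_map size_filter.
  have smA : sm lA = a by rewrite /sm big_map big_filter.
  have smB : sm lB = b by rewrite /sm big_map big_filter.
  have posA : all (fun y => 0 < y)%N lA.
    apply/allP => y /mapP [p]; rewrite mem_filter => /andP [_ ps] ->.
    exact: (allP hp p ps).
  have posB : all (fun y => 0 < y)%N lB.
    apply/allP => y /mapP [p]; rewrite mem_filter => /andP [_ ps] ->.
    exact: (allP hp p ps).
  have hsa := size_le_sm lA posA.
  have hsb := size_le_sm lB posB.
  have [al1 al2] := alt_sched sch hsort.
  have hj : (size lB < (minn b a.+1).+1)%N by lia.
  apply: (bigmin_inf (Ordinal hj)) => //=.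
  rewrite /cost.
  have h3 : [\/ size lA = size lB, size lA = (size lB).+1 | (size lA).+1 = size lB].
    case: (ltngtP (size lA) (size lB)) => h; [constructor 3|constructor 2|constructor 1]; lia.
  apply: le_trans (leeD2l _ (mcost_le _ kA kB tA tB a (size lB) (size lA) h3)) _.
  rewrite /costB /costA -{1}smB -{1}smA.
  apply: le_trans (leeD (gcost_le _ tB kB lB) (gcost_le _ tA kA lA)) _.
  rewrite -EFinD lee_fin /sched_time (bigID (fun p : batch => p.1)) /=.
  rewrite -!sum_lin addrC le_eqVlt; apply/orP; left; apply/eqP; congr (_ + _).
  + by rewrite big_map big_filter; apply: eq_bigr => -[[] x].
  + by rewrite big_map big_filter; apply: eq_bigr => -[[] x].
Qed.
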